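(* In the setting described in the context, let $C_\phi$ be a Lipschitz constant of $\phi$. For every $m$ and every $x,x'$ lying in the same green cylinder, $$e^{-C_\phi/2}\le \frac{H_m(x)}{H_m(x')}\le e^{C_\phi/2}.$$
   Context: Setting: $A$ ($K\times K$) and $D$ ($N\times N$) are irreducible $\{0,1\}$-matrices; $M_0$ is a $(K+N)\times(K+N)$ $\{0,1\}$-matrix with diagonal blocks $A$, $D$ and some power with all entries positive; the alphabet is $\{\alpha_1,\dots,\alpha_K,\delta_1,\dots,\delta_N\}$; $\Sigma_0$ is the one-sided SFT for $M_0$ with shift $\sigma$ and metric $d(\omega,\omega')=2^{-\min\{k:\omega_k\ne\omega'_k\}}$; $\Sigma_A,\Sigma_D$ are the points with only $\alpha$-digits, resp. only $\delta$-digits; $\phi:\Sigma_0\to\mathbb R$ is Lipschitz with $|\phi(x)-\phi(y)|\le C_\phi d(x,y)$ and has the same pressure $P$ on $\Sigma_A$ and $\Sigma_D$. $\alpha_j\delta_l$ denotes any allowed word $\alpha$-digit then $\delta$-digit, $\delta_i\alpha_k$ any allowed word $\delta$-digit then $\alpha$-digit; $\delta^n,\alpha^n$ denote words of $n$ $\delta$-, resp. $\alpha$-digits. $A'\le A$, $D'\le D$ entrywise are $\{0,1\}$-matrices with $A'\ne A$, $D'\ne D$, rows of $A'$ indexed by $\alpha$-digits that can follow a $\delta$-digit nonzero, rows of $D'$ indexed by $\delta$-digits that can follow an $\alpha$-digit nonzero; $(n_m),(n'_m)$ increasing integer sequences tending to $\infty$. $\Sigma_m\subset\Sigma_0$ is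 obtained by additionally forbidding: $\alpha_j\delta_l\delta^n\delta_i\alpha_k$ with $n<n'_m-2$, or with $n\ge n'_m-2$ and $\delta_l$ followed by the first $n'_m-2$ letters of $\delta^n$ not $D'$-eligible; $\delta_i\alpha_k\alpha^n\alpha_j\delta_l$ with $n<n_m-2$, or with $n\ge n_m-2$ and $\alpha_k$ followed by the first $n_m-2$ letters of $\alpha^n$ not $A'$-eligible (eligible = all consecutive transitions allowed by the matrix). $P_m$ is the pressure of $\phi$ on $\Sigma_m$. Induced scheme: green cylinders are the 2-cylinders $[\alpha_j\delta_l]$ and $[\delta_i\alpha_k]$, and $G$ is their union. For $x\in[\delta_i\alpha_k]$ its $g_m$-preimages are the points $y=\alpha_j\delta_l w x$ (with $w$ a $\delta$-word) such that $\alpha_j\delta_l w\delta_i\alpha_k$ is allowed in $\Sigma_m$, with return time $r_m(y)=|w|+2$; symmetrically for $x\in[\alpha_j\delta_l]$. The induced transfer operator is $\mathcal L_{G,m}f(x)=\sum_{y:\,g_m(y)=x}e^{S_{r_m(y)}\phi(y)-r_m(y)P_m}f(y)$, with $S_n\phi=\sum_{i<n}\phi\circ\sigma^i$. It has spectral radius 1; $\nu_m$ is the probability with $\int\mathcal L_{G,m}f\,d\nu_m=\int f\,d\nu_m$, and $H_m=\lim_{n}\frac1n\sum_{k=0}^{n-1}\mathcal L_{G,m}^k(\mathbf 1_G)$ (uniform limit) is the positive eigenfunction $\mathcal L_{G,m}H_m=H_m$ with $\int H_m\,d\nu_m=1$. *)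

(* Defs.v *)
From HB Require Import structures.
From mathcomp Require Import all_boot all_order all_algebra.
From mathcomp Require Import all_classical all_reals all_analysis.

Set Implicit Arguments.
Unset Strict Implicit.
Unset Printing Implicit Defensive.

Import Order.TTheory GRing.Theory Num.Theory.
Import numFieldNormedType.Exports.
Local Open Scope classical_set_scope.
Local Open Scope ring_scope.

Section Setting.
Variable R : realType.
Variables K N : nat.

(* alphabet {alpha_1..alpha_K, delta_1..delta_N} encoded as 'I_(K+N):
   alpha_j = lshift N j, delta_l = rshift K l *)
Local Notation alph := 'I_(K + N).
Local Notation pt := (nat -> alph).

Definition isA (a : alph) : bool := (a < K)%N.
Definition isD (a : alph) : bool := (K <= a)%N.
Definition alpha (j : 'I_K) : alph := lshift N j.
Definition delta (l : 'I_N) : alph := rshift K l.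

Definition zero_one n (M : 'M[int]_n) : Prop :=
  forall i j, M i j = 0 \/ M i j = 1.
Definition irreducible_mx n (M : 'M[int]_n) : Prop :=
  forall i j, exists k, (0 < k)%N /\ 0 < (M ^+ k) i j.
Definition primitive_mx n (M : 'M[int]_n) : Prop :=
  exists k, forall i j, 0 < (M ^+ k) i j.

Definition Sigma0 (M0 : 'M[int]_(K + N)) : set pt :=
  [set x | forall k, M0 (x k) (x k.+1) = 1].
Definition SigmaA (M0 : 'M[int]_(K + N)) : set pt :=
  [set x | Sigma0 M0 x /\ forall k, isA (x k)].
Definition SigmaD (M0 : 'M[int]_(K + N)) : set pt :=
  [set x | Sigma0 M0 x /\ forall k, isD (x k)].

Definition shiftn (i : nat) (x : pt) : pt := fun k => x (i + k)%N.

Definition dist (x y : pt) : R :=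
  match pselect (exists k, x k != y k) with
  | left h => 2 ^- (@ex_minn (fun k => x k != y k) h)
  | right _ => 0
  end.

Definition lipschitz_const (X : set pt) (phi : pt -> R) (C : R) : Prop :=
  forall x y, X x -> X y -> `|phi x - phi y| <= C * dist x y.

Definition Sn (phi : pt -> R) (n : nat) (x : pt) : R :=
  \sum_(i < n) phi (shiftn i x).

Definition cyl (w : seq alph) : set pt :=
  [set x | forall i, (i < size w)%N -> x i = nth (x 0%N) w i].

Definition Zn (X : set pt) (phi : pt -> R) (n : nat) : R :=
  \sum_(w : n.-tuple alph | `[< X `&` cyl w !=set0 >])
     expR (sup [set Sn phi n x | x in X `&` cyl w]).
Definition pressure (X : set pt) (phi : pt -> R) : R :=
  limn (fun n : nat => ln (Zn X phi n) / n%:R).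

Definition occurs_at (x : pt) (p : nat) (s : seq alph) : Prop :=
  forall i, (i < size s)%N -> x (p + i)%N = nth (x 0%N) s i.
Definition allowed (X : set pt) (s : seq alph) : Prop :=
  exists x p, X x /\ occurs_at x p s.

Definition Atrans (A' : 'M[int]_K) (a b : alph) : bool :=
  match fintype.split a, fintype.split b with
  | inl j, inl j' => A' j j' == 1
  | _, _ => false
  end.
Definition Dtrans (D' : 'M[int]_N) (a b : alph) : bool :=
  match fintype.split a, fintype.split b with
  | inr l, inr l' => D' l l' == 1
  | _, _ => false
  end.

(* A word alpha_j delta_l delta^n delta_i alpha_k occurring at position p
   means: x p is alpha, x (p+1) .. x (p+n+2) are delta, x (p+n+3) is alpha.
   It is allowed only if n >= n'_m - 2 and delta_l followed by the first
   n'_m - 2 letters of delta^n (positions p+1 .. p+n'_m-1) is D'-eligible.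
   Symmetrically for alpha-runs. *)
Definition SigmaM (M0 : 'M[int]_(K + N)) (A' : 'M[int]_K) (D' : 'M[int]_N)
    (nm nm' : nat -> nat) (m : nat) : set pt :=
  [set x | Sigma0 M0 x /\
    (forall p n, isA (x p) ->
       (forall i, (i < n.+2)%N -> isD (x (p + i.+1)%N)) ->
       isA (x (p + n.+3)%N) ->
       (nm' m - 2 <= n)%N /\
       forall i, (i < nm' m - 2)%N -> Dtrans D' (x (p + i.+1)%N) (x (p + i.+2)%N)) /\
    (forall p n, isD (x p) ->
       (forall i, (i < n.+2)%N -> isA (x (p + i.+1)%N)) ->
       isD (x (p + n.+3)%N) ->
       (nm m - 2 <= n)%N /\
       forall i, (i < nm m - 2)%N -> Atrans A' (x (p + i.+1)%N) (x (p + i.+2)%N))].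

Definition greenAD (x : pt) : bool := isA (x 0%N) && isD (x 1%N).
Definition greenDA (x : pt) : bool := isD (x 0%N) && isA (x 1%N).
Definition Green (M0 : 'M[int]_(K + N)) : set pt :=
  [set x | Sigma0 M0 x /\ (greenAD x || greenDA x)].

Definition prepend (s : seq alph) (x : pt) : pt :=
  fun k => if (k < size s)%N then nth (x 0%N) s k else x (k - size s)%N.

(* induced transfer operator L_{G,m}, acting on nonnegative
   extended-real valued functions (the series over the length |w| = n
   of the delta- (resp. alpha-) word w is a series of nonnegative terms) *)
Definition LG (M0 : 'M[int]_(K + N)) (A' : 'M[int]_K) (D' : 'M[int]_N)
    (nm nm' : nat -> nat) (m : nat) (phi : pt -> R)
    (f : pt -> \bar R) : pt -> \bar R :=
  fun x =>
  let Sm := SigmaM M0 A' D' nm nm' m in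
  let Pm := pressure Sm phi in
  if `[< Sigma0 M0 x >] && greenDA x then
    (\sum_(0 <= n <oo)
       \sum_(j : 'I_K) \sum_(l : 'I_N) \sum_(w : n.-tuple 'I_N)
         (if `[< allowed Sm ([:: alpha j; delta l] ++ map delta w ++ [:: x 0%N; x 1%N]) >]
          then (expR (Sn phi n.+2 (prepend (alpha j :: delta l :: map delta w) x)
                      - n.+2%:R * Pm))%:E
               * f (prepend (alpha j :: delta l :: map delta w) x)
          else 0))%E
  else if `[< Sigma0 M0 x >] && greenAD x then
    (\sum_(0 <= n <oo)
       \sum_(i : 'I_N) \sum_(k : 'I_K) \sum_(w : n.-tuple 'I_K)
         (if `[< allowed Sm ([:: delta i; alpha k] ++ map alpha w ++ [:: x 0%N; x 1%N]) >]
          then (expR (Sn phi n.+2 (prepend (delta i :: alpha k :: map alpha w) x)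
                      - n.+2%:R * Pm))%:E
               * f (prepend (delta i :: alpha k :: map alpha w) x)
          else 0))%E
  else 0%E.

Definition indicG (M0 : 'M[int]_(K + N)) : pt -> \bar R :=
  fun x => if `[< Green M0 x >] then 1%E else 0%E.

Definition cesaro (M0 : 'M[int]_(K + N)) (A' : 'M[int]_K) (D' : 'M[int]_N)
    (nm nm' : nat -> nat) (m : nat) (phi : pt -> R) (n : nat) (x : pt) : \bar R :=
  ((n.+1%:R)^-1%:E *
     \sum_(k < n.+1) iter k (LG M0 A' D' nm nm' m phi) (indicG M0) x)%E.

Definition is_H (M0 : 'M[int]_(K + N)) (A' : 'M[int]_K) (D' : 'M[int]_N)
    (nm nm' : nat -> nat) (m : nat) (phi : pt -> R) (H : pt -> R) : Prop :=
  forall eps : R, 0 < eps -> exists n0 : nat, forall n x, (n0 <= n)%N ->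
    Green M0 x ->
    ((H x - eps)%:E <= cesaro M0 A' D' nm nm' m phi n x <= (H x + eps)%:E)%E.

End Setting.

(* Main.v *)
Set Warnings "-all".
Require Import Defs.
From HB Require Import structures.
From mathcomp Require Import all_boot all_order all_algebra.
From mathcomp Require Import all_classical all_reals all_analysis.
From mathcomp Require Import zify ring lra.
Import Order.TTheory GRing.Theory Num.Theory.
Import numFieldNormedType.Exports.
Local Open Scope classical_set_scope.
Local Open Scope ring_scope.

Lemma dist_le (R : realType) K N (x y : nat -> 'I_(K+N)) q :
  (forall i, (i < q)%N -> x i = y i) -> dist R x y <= (2^-1) ^+ q.
Proof.
move=> H; rewrite /dist; case: pselect => [h|_]; last first.
  by rewrite exprn_ge0 // invr_ge0.
case: ex_minnP => k hk _.
have qk : (q <= k)%N.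
  rewrite leqNgt; apply/negP => kq.
  by move: hk; rewrite H // eqxx.
rewrite -exprVn; apply: ler_wiXn2l => //.
by rewrite invf_le1 // ler1n.
Qed.

Lemma geom_le (R : realType) m : forall p,
  \sum_(i < m) ((2^-1 : R) ^+ (m - i + p)) <= (2^-1) ^+ p.
Proof.
elim: m => [|m IH] p; first by rewrite big_ord0 exprn_ge0 // invr_ge0.
rewrite big_ord_recr /=.
have -> : \sum_(i < m) (2^-1 : R) ^+ (m.+1 - widen_ord (leqnSn m) i + p)
   = \sum_(i < m) (2^-1 : R) ^+ (m - i + p.+1).
  apply: eq_bigr => i _ /=; congr (_ ^+ _).
  have := ltn_ord i; lia.
have -> : (m.+1 - m + p = p.+1)%N by lia.
apply: le_trans (lerD (IH p.+1) (lexx _)) _.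
rewrite exprS; lra.
Qed.

Lemma shift_Sigma0 {K N} {M0 : 'M[int]_(K+N)} i {x} :
  Sigma0 M0 x -> Sigma0 M0 (shiftn i x).
Proof. by move=> Sx k; rewrite /shiftn addnS; apply: Sx. Qed.

Lemma prepend_agree {K N} {s : seq 'I_(K+N)} {y y' : nat -> 'I_(K+N)} {p} :
  (forall i, (i < p)%N -> y i = y' i) ->
  forall i, (i < size s + p)%N -> prepend s y i = prepend s y' i.
Proof.
move=> H i hi; rewrite /prepend; case: ifP => h.
  exact: set_nth_default.
apply: H; move/negbT: h; rewrite -leqNgt => h; lia.
Qed.

Lemma prepend_Sigma0 {K N} {M0 : 'M[int]_(K+N)} {X : set (nat -> 'I_(K+N))} {s y} :
  X `<=` Sigma0 M0 -> Sigma0 M0 y -> allowed X (s ++ [:: y 0%N; y 1%N]) ->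
  Sigma0 M0 (prepend s y).
Proof.
move=> XS Sy [z [q [Xz occ]]].
have Sz := XS _ Xz.
have key : forall i, (i <= size s)%N ->
    prepend s y i = nth (z 0%N) (s ++ [:: y 0%N; y 1%N]) i.
  move=> i hi; rewrite /prepend nth_cat; case: ifP => h.
    exact: set_nth_default.
  have -> : i = size s by move/negbT: h; rewrite -leqNgt => h; lia.
  by rewrite subnn.
move=> k; case: (ltnP k (size s)) => hk.
  rewrite key; last exact: ltnW.
  rewrite key //.
  have sz : size (s ++ [:: y 0%N; y 1%N]) = (size s).+2 by rewrite size_cat /= addn2.
  rewrite -occ; last by rewrite sz; lia.
  rewrite -occ; last by rewrite sz; lia.
  by rewrite addnS; apply: Sz.
rewrite /prepend ltnNge hk /=.
have -> : (k.+1 < size s)%N = false by apply/negbTE; rewrite -leqNgt; lia.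
rewrite subSn //; exact: Sy.
Qed.

Lemma Sn_diff {R : realType} {K N} {M0 : 'M[int]_(K+N)} {phi : (nat -> 'I_(K+N)) -> R}
   {C : R} {s y y' p} :
  0 <= C -> lipschitz_const (Sigma0 M0) phi C ->
  Sigma0 M0 (prepend s y) -> Sigma0 M0 (prepend s y') ->
  (forall i, (i < p)%N -> y i = y' i) ->
  Sn phi (size s) (prepend s y) - Sn phi (size s) (prepend s y') <= C * (2^-1) ^+ p.
Proof.
move=> C0 Lip S1 S2 ag.
rewrite /Sn -sumrB.
apply: le_trans (_ : \sum_(i < size s) C * (2^-1) ^+ (size s - i + p) <= _).
  apply: ler_sum => i _.
  apply: le_trans (ler_norm _) _.
  apply: le_trans (Lip _ _ (shift_Sigma0 i S1) (shift_Sigma0 i S2)) _.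
  apply: ler_wpM2l => //; apply: dist_le => j hj.
  rewrite /shiftn; apply: (prepend_agree ag).
  have := ltn_ord i; lia.
by rewrite -mulr_sumr; apply: ler_wpM2l => //; apply: geom_le.
Qed.

Definition Bd {R : realType} (C : R) (p : nat) : R := expR (C * 2 * (2^-1) ^+ p).

Definition goodf {R : realType} {K N} (M0 : 'M[int]_(K+N)) (C : R)
   (f : (nat -> 'I_(K+N)) -> \bar R) : Prop :=
  (forall y, (0 <= f y)%E) /\
  forall p y y', (2 <= p)%N -> Sigma0 M0 y -> Sigma0 M0 y' ->
    (forall i, (i < p)%N -> y i = y' i) ->
    (f y <= (Bd C p)%:E * f y')%E.

Lemma term_le (R : realType) K N (M0 : 'M[int]_(K+N)) (phi : (nat -> 'I_(K+N)) -> R)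
   (C : R) (X : set (nat -> 'I_(K+N))) f s y y' p (c : R) :
  0 <= C -> lipschitz_const (Sigma0 M0) phi C -> goodf M0 C f ->
  X `<=` Sigma0 M0 -> Sigma0 M0 y -> Sigma0 M0 y' ->
  (2 <= p)%N -> (forall i, (i < p)%N -> y i = y' i) -> (1 <= size s)%N ->
  allowed X (s ++ [:: y 0%N; y 1%N]) ->
  ((expR (Sn phi (size s) (prepend s y) - c))%:E * f (prepend s y)
   <= (Bd C p)%:E * ((expR (Sn phi (size s) (prepend s y') - c))%:E * f (prepend s y')))%E.
Proof.
move=> C0 Lip [f0 fB] XS Sy Sy' p2 ag s1 al.
have e0 : y 0%N = y' 0%N by apply: ag; lia.
have e1 : y 1%N = y' 1%N by apply: ag; lia.
have P1 := prepend_Sigma0 XS Sy al.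
have P2 : Sigma0 M0 (prepend s y').
  by apply: (prepend_Sigma0 XS Sy'); rewrite -e0 -e1.
have hf := fB (size s + p)%N _ _ ltac:(lia) P1 P2 (prepend_agree ag).
have hS := Sn_diff C0 Lip P1 P2 ag.
set a := expR (Sn phi (size s) (prepend s y) - c).
set a' := expR (Sn phi (size s) (prepend s y') - c).
have ha : a <= expR (C * (2^-1) ^+ p) * a'.
  rewrite /a /a' -expRD ler_expR; lra.
apply: (@le_trans _ _ (((expR (C * (2^-1) ^+ p) * a')%:E) * ((Bd C (size s + p))%:E * f (prepend s y')))%E).
  apply: lee_pmul; rewrite ?lee_fin //; exact: expR_ge0.
have -> : ((expR (C * 2^-1 ^+ p) * a')%:E * ((Bd C (size s + p))%:E * f (prepend s y')))%E
   = ((expR (C * 2^-1 ^+ p) * Bd C (size s + p))%:E * (a'%:E * f (prepend s y')))%E.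
  by rewrite !EFinM -!muleA; congr (_ * _)%E; rewrite muleCA.
apply: lee_wpmul2r.
  by apply: mule_ge0 => //; rewrite lee_fin expR_ge0.
rewrite lee_fin /Bd -expRD ler_expR.
have h1 : (2^-1 : R) ^+ (size s + p) <= 2^-1 * (2^-1) ^+ p.
  rewrite -exprS; apply: ler_wiXn2l => //; first by rewrite invf_le1 // ler1n.
  lia.
have h2 : 0 <= (2^-1 : R) ^+ p by rewrite exprn_ge0.
nra.
Qed.

Ltac nn := repeat (apply: sume_ge0 => ? _); case: asboolP => _ //;
  apply: mule_ge0 => //; rewrite lee_fin expR_ge0.

Lemma LG_good (R : realType) K N (M0 : 'M[int]_(K+N)) (A' : 'M[int]_K) (D' : 'M[int]_N)
   nm nm' m (phi : (nat -> 'I_(K+N)) -> R) (C : R) f :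
  0 <= C -> lipschitz_const (Sigma0 M0) phi C -> goodf M0 C f ->
  goodf M0 C (LG M0 A' D' nm nm' m phi f).
Proof.
move=> C0 Lip gf; have [f0 fB] := gf.
have XS : SigmaM M0 A' D' nm nm' m `<=` Sigma0 M0 by move=> z [].
split.
  move=> y; rewrite /LG; case: ifP => _; [|case: ifP => _ //].
    by apply: nneseries_ge0 => n _ _; nn.
  by apply: nneseries_ge0 => n _ _; nn.
move=> p y y' p2 Sy Sy' ag.
have e0 : y 0%N = y' 0%N by apply: ag; lia.
have e1 : y 1%N = y' 1%N by apply: ag; lia.
have hS : `[< Sigma0 M0 y >] = true by apply/asboolP.
have hS' : `[< Sigma0 M0 y' >] = true by apply/asboolP.
rewrite /LG hS hS' /=.
have -> : greenDA y' = greenDA y by rewrite /greenDA e0 e1.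
have -> : greenAD y' = greenAD y by rewrite /greenAD e0 e1.
rewrite -e0 -e1.
case: ifP => _.
  rewrite -nneseriesZl; last by move=> n _; nn.
  apply: lee_nneseries; first by move=> n _ _; nn.
  move=> n _.
  rewrite ge0_sume_distrr; last by move=> ? _; nn.
  apply: lee_sum => j _.
  rewrite ge0_sume_distrr; last by move=> ? _; nn.
  apply: lee_sum => l _.
  rewrite ge0_sume_distrr; last by move=> ? _; nn.
  apply: lee_sum => w _.
  case: asboolP => al; last by rewrite mule0.
  have T := @term_le R K N M0 phi C _ f (alpha N j :: delta K l :: map (@delta K N) w)
     y y' p (n.+2%:R * pressure (SigmaM M0 A' D' nm nm' m) phi) C0 Lip gf XS Sy Sy' p2 ag
     isT al.
  by rewrite /= size_map size_tuple in T.
case: ifP => _; last by rewrite mule0.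
  rewrite -nneseriesZl; last by move=> n _; nn.
  apply: lee_nneseries; first by move=> n _ _; nn.
  move=> n _.
  rewrite ge0_sume_distrr; last by move=> ? _; nn.
  apply: lee_sum => j _.
  rewrite ge0_sume_distrr; last by move=> ? _; nn.
  apply: lee_sum => l _.
  rewrite ge0_sume_distrr; last by move=> ? _; nn.
  apply: lee_sum => w _.
  case: asboolP => al; last by rewrite mule0.
  have T := @term_le R K N M0 phi C _ f (delta K j :: alpha N l :: map (@alpha K N) w)
     y y' p (n.+2%:R * pressure (SigmaM M0 A' D' nm nm' m) phi) C0 Lip gf XS Sy Sy' p2 ag
     isT al.
  by rewrite /= size_map size_tuple in T.
Qed.

Lemma Bd_ge1 (R : realType) (C : R) p : 0 <= C -> 1 <= Bd C p.
Proof.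
move=> C0; rewrite /Bd; apply: le_trans (expR_ge1Dx _).
have : 0 <= C * 2 * (2^-1 : R) ^+ p by rewrite !mulr_ge0 // exprn_ge0.
lra.
Qed.

Lemma indic_good (R : realType) K N (M0 : 'M[int]_(K+N)) (C : R) :
  0 <= C -> goodf M0 C (@indicG R K N M0).
Proof.
move=> C0; split.
  by move=> y; rewrite /indicG; case: asboolP.
move=> p y y' p2 Sy Sy' ag.
have e0 : y 0%N = y' 0%N by apply: ag; lia.
have e1 : y 1%N = y' 1%N by apply: ag; lia.
have -> : indicG R M0 y = indicG R M0 y'.
  have gE : (greenAD y || greenDA y) = (greenAD y' || greenDA y').
    by rewrite /greenAD /greenDA e0 e1.
  rewrite /indicG.
  case: asboolP => [[_ h]|h]; case: asboolP => [[_ h']|h'] //.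
  by exfalso; apply: h'; split => //; rewrite -gE.
  by exfalso; apply: h; split => //; rewrite gE.
rewrite /indicG; case: asboolP => _; last by rewrite mule0.
by rewrite mule1 lee_fin Bd_ge1.
Qed.

Lemma iter_good (R : realType) K N (M0 : 'M[int]_(K+N)) (A' : 'M[int]_K) (D' : 'M[int]_N)
   nm nm' m (phi : (nat -> 'I_(K+N)) -> R) (C : R) k :
  0 <= C -> lipschitz_const (Sigma0 M0) phi C ->
  goodf M0 C (iter k (LG M0 A' D' nm nm' m phi) (indicG R M0)).
Proof.
move=> C0 Lip; elim: k => [|k IH] /=; first exact: indic_good.
exact: LG_good.
Qed.

Lemma ces_le (R : realType) K N (M0 : 'M[int]_(K+N)) (A' : 'M[int]_K) (D' : 'M[int]_N)
   nm nm' m (phi : (nat -> 'I_(K+N)) -> R) (C : R) n x x' :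
  0 <= C -> lipschitz_const (Sigma0 M0) phi C ->
  Sigma0 M0 x -> Sigma0 M0 x' -> x 0%N = x' 0%N -> x 1%N = x' 1%N ->
  (Defs.cesaro M0 A' D' nm nm' m phi n x <=
    (Bd C 2)%:E * Defs.cesaro M0 A' D' nm nm' m phi n x')%E.
Proof.
move=> C0 Lip Sx Sx' e0 e1; rewrite /Defs.cesaro muleCA.
apply: lee_wpmul2l; first by rewrite lee_fin invr_ge0.
rewrite ge0_sume_distrr; last by move=> k _; have [] := @iter_good R K N M0 A' D' nm nm' m phi C k C0 Lip.
apply: lee_sum => k _.
have [_ B] := @iter_good R K N M0 A' D' nm nm' m phi C k C0 Lip.
apply: B => // i hi.
by case: i hi => [|[|i]] //.
Qed.

Lemma H_le (R : realType) K N (M0 : 'M[int]_(K+N)) (A' : 'M[int]_K) (D' : 'M[int]_N)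
   nm nm' m (phi : (nat -> 'I_(K+N)) -> R) (C : R) H x x' :
  0 <= C -> lipschitz_const (Sigma0 M0) phi C ->
  is_H M0 A' D' nm nm' m phi H ->
  Green M0 x -> Green M0 x' -> x 0%N = x' 0%N -> x 1%N = x' 1%N ->
  H x <= Bd C 2 * H x'.
Proof.
move=> C0 Lip hH Gx Gx' e0 e1.
have E1 := @Bd_ge1 R C 2 C0.
apply/ler_addgt0Pr => e e_gt0.
have epos : 0 < e / (Bd C 2 + 1) by apply: divr_gt0 => //; lra.
have [n0 hn] := hH _ epos.
have /andP [h1 _] := hn n0 x (leqnn _) Gx.
have /andP [_ h2] := hn n0 x' (leqnn _) Gx'.
have hB : (0 <= (Bd C 2)%:E)%E by rewrite lee_fin; lra.
have := le_trans h1 (le_trans (@ces_le R K N M0 A' D' nm nm' m phi C n0 x x' C0 Lip (proj1 Gx) (proj1 Gx') e0 e1)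
          (lee_wpmul2l hB h2)).
rewrite -EFinM lee_fin => h.
have : (Bd C 2 + 1) * (e / (Bd C 2 + 1)) = e by field; lra.
nra.
Qed.

Theorem lemma2 (R : realType) (K N : nat)
    (A : 'M[int]_K) (D : 'M[int]_N) (M0 : 'M[int]_(K + N))
    (A' : 'M[int]_K) (D' : 'M[int]_N) (nm nm' : nat -> nat)
    (phi : (nat -> 'I_(K + N)) -> R) (Cphi : R) :
  (* A, D irreducible {0,1}-matrices; M0 a primitive {0,1}-matrix
     with diagonal blocks A and D *)
  zero_one A -> zero_one D -> irreducible_mx A -> irreducible_mx D ->
  zero_one M0 -> ulsubmx M0 = A -> drsubmx M0 = D -> primitive_mx M0 ->
  (* phi Lipschitz on Sigma_0 with constant Cphi, same pressure on Sigma_A, Sigma_D *)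
  lipschitz_const (Sigma0 M0) phi Cphi ->
  pressure (SigmaA M0) phi = pressure (SigmaD M0) phi ->
  (* A' <= A, D' <= D, {0,1}, A' <> A, D' <> D, row conditions *)
  zero_one A' -> zero_one D' ->
  (forall i j, A' i j <= A i j) -> (forall i j, D' i j <= D i j) ->
  A' <> A -> D' <> D ->
  (forall k : 'I_K, (exists i : 'I_N, M0 (delta K i) (alpha N k) = 1) ->
     exists k' : 'I_K, A' k k' != 0) ->
  (forall l : 'I_N, (exists j : 'I_K, M0 (alpha N j) (delta K l) = 1) ->
     exists l' : 'I_N, D' l l' != 0) ->
  (* (n_m), (n'_m) increasing, tending to infinity *)
  {homo nm : a b / (a < b)%N} -> {homo nm' : a b / (a < b)%N} ->
  forall (m : nat) (H : (nat -> 'I_(K + N)) -> R),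
  (* H = H_m is the uniform limit of the Cesaro averages of L_{G,m}^k 1_G *)
  is_H M0 A' D' nm nm' m phi H ->
  forall x x' : nat -> 'I_(K + N),
    Green M0 x -> Green M0 x' -> x 0%N = x' 0%N -> x 1%N = x' 1%N ->
    expR (- Cphi / 2) * H x' <= H x /\ H x <= expR (Cphi / 2) * H x'.
Proof.
Proof.
move=> _ _ _ _ _ _ _ _ Lip _ _ _ _ _ _ _ _ _ _ _ m H hH x x' Gx Gx' e0 e1.
have C0 : 0 <= Cphi.
  have [Sx g] := Gx.
  have ne : x 0%N != x 1%N.
    apply/eqP => E.
    by case/orP: g => /andP [a b]; move: a b; rewrite /isA /isD E; lia.
  have dpos : 0 < dist R x (shiftn 1 x).
    rewrite /dist; case: pselect => [h|h]; last first.
      by exfalso; apply: h; exists 0%N; rewrite /shiftn.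
    by rewrite invr_gt0 exprn_gt0.
  have := Lip _ _ Sx (shift_Sigma0 1 Sx).
  have := normr_ge0 (phi x - phi (shiftn 1 x)).
  nra.
have hB : Bd Cphi 2 = expR (Cphi / 2).
  by rewrite /Bd; congr expR; rewrite expr2; field.
have h1 := @H_le R K N M0 A' D' nm nm' m phi Cphi H x x' C0 Lip hH Gx Gx' e0 e1.
have h2 := @H_le R K N M0 A' D' nm nm' m phi Cphi H x' x C0 Lip hH Gx' Gx
  (esym e0) (esym e1).
rewrite hB in h1 h2; split => //.
have : expR (- Cphi / 2) * H x' <= expR (- Cphi / 2) * (expR (Cphi / 2) * H x).
  by apply: ler_wpM2l => //; exact: expR_ge0.
by rewrite mulrA -expRD mulNr addNr expR0 mul1r.
Qed.
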